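(* Let $\mathbb{K}$ be a semiring. Every unambiguous one-way $\mathbb{K}$-automaton is equivalent to a deterministic two-way $\mathbb{K}$-automaton, i.e. both assign the same weight to every word of $A^*$.
   Context: A semiring $\mathbb{K}$ (not necessarily commutative) has addition $\oplus$ and multiplication $\otimes$ with the usual axioms. A one-way $\mathbb{K}$-automaton $(P,A,G,I',T')$ has finite state set $P$, partial $I',T':P\to\mathbb{K}$ (supports: initial/final states) and partial $G:P\times A\times P\to\mathbb{K}$ (support: transitions); its computations on $w=w_1\cdots w_n$ are paths $(q_0,w_1,q_1)\cdots(q_{n-1},w_n,q_n)$ of transitions from an initial to a final state, with weight $I'(q_0)\otimes G(q_0,w_1,q_1)\otimes\cdots\otimes G(q_{n-1},w_n,q_n)\otimes T'(q_n)$; the weight of $w$ is the sum of these. It is unambiguous if every word labels at most one computation. With $A_{\vdash\dashv}=A\cup\{\vdash,\dashv\}$ ($\vdash,\dashv$ fresh end-markers), a two-way $\mathbb{K}$-automaton $(Q,A,E,I,T)$ has finite state set $Q$, partial $I,T:Q\to\mathbb{K}$, and partial $E:Q\times(A_{\vdash\dashv}\times\{-1,+1\})\times Q\to\mathbb{K}$ whose support (the transitions) contains no $(p,\vdash,-1,q)$ nor $(p,\dashv,+1,q)$; for $t=(p,a,d,q)$: $\sigma(t)=p$, $\tau(t)=q$, $\lambda(t)=a$, $\delta(t)=d$. For $w=w_1\cdots w_n$ set $w_0=\vdash$, $w_{n+1}=\dashv$; a computation on $w$ is a sequence of configurations $((p_0,i_0),\dots,(p_k,i_k))$, $i_j\in[0;n+1]$,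 with $i_0=1$, $i_k=n+1$, $p_0$ initial, $p_k$ final, and transitions $t_j$ with $\sigma(t_j)=p_j$, $\tau(t_j)=p_{j+1}$, $\lambda(t_j)=w_{i_j}$, $i_{j+1}=i_j+\delta(t_j)$; its weight is $I(p_0)\otimes\bigotimes_{j=0}^{k-1}E(t_j)\otimes T(p_k)$, and the weight of $w$ is the sum of the weights of its computations. A two-way automaton is deterministic if (i) it has at most one initial state; (ii) for every state $p$ and every letter $a$ there is at most one transition outgoing from $p$ with label $a$; (iii) for every final state $p$ there is no transition outgoing from $p$ with label $\dashv$. *)

(* Defs.v *)
From HB Require Import structures.
From mathcomp Require Import all_boot all_algebra.
Set Implicit Arguments. Unset Strict Implicit. Unset Printing Implicit Defensive.
Import GRing.Theory.
Local Open Scope ring_scope.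

(* Semiring K: a (not necessarily commutative) pzSemiRingType.
   Partial maps X -> K are modelled as X -> option K (None = undefined). *)

Record oneway (K : pzSemiRingType) (A : finType) := OneWay {
  ow_state : finType;
  ow_trans : ow_state -> A -> ow_state -> option K;
  ow_init  : ow_state -> option K;
  ow_final : ow_state -> option K }.
Arguments ow_state {K A}. Arguments ow_trans {K A}. Arguments ow_init {K A}. Arguments ow_final {K A}.

Section OneWayDefs.
Variables (K : pzSemiRingType) (A : finType) (M : oneway K A).

Fixpoint ow_run (q : ow_state M) (w : seq A) (qs : seq (ow_state M)) : option K :=
  match w, qs with
  | [::], [::] => ow_final M q
  | a :: w', q' :: qs' =>
      match ow_trans M q a q', ow_run q' w' qs' with
      | Some x, Some y => Some (x * y)
      | _, _ => None
      end
  | _, _ => None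
  end.

Definition ow_comp_weight (w : seq A) (q0 : ow_state M) (qs : seq (ow_state M))
  : option K :=
  match ow_init M q0, ow_run q0 w qs with
  | Some x, Some y => Some (x * y)
  | _, _ => None
  end.

(* weight of w: sum over all computations (all other state sequences of
   length n+1 contribute 0) *)
Definition ow_weight (w : seq A) : K :=
  \sum_(q0 : ow_state M) \sum_(t : (size w).-tuple (ow_state M))
     odflt 0 (ow_comp_weight w q0 t).

Definition unambiguous : Prop :=
  forall (w : seq A) (q0 q0' : ow_state M) (qs qs' : seq (ow_state M)),
    isSome (ow_comp_weight w q0 qs) -> isSome (ow_comp_weight w q0' qs') ->
    q0 = q0' /\ qs = qs'.

End OneWayDefs.

Inductive emark (A : Type) := LEnd | REnd | Letter of A.
Arguments LEnd {A}. Arguments REnd {A}.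

Inductive dir := Left | Right .

Record twoway (K : pzSemiRingType) (A : finType) := TwoWay {
  tw_state : finType;
  tw_trans : tw_state -> emark A -> dir -> tw_state -> option K;
  tw_init  : tw_state -> option K;
  tw_final : tw_state -> option K;
  tw_noleft  : forall p q, tw_trans p LEnd Left q = None;
  tw_noright : forall p q, tw_trans p REnd Right q = None }.
Arguments tw_state {K A}. Arguments tw_trans {K A}. Arguments tw_init {K A}. Arguments tw_final {K A}.

Section TwoWayDefs.
Variables (K : pzSemiRingType) (A : finType) (M : twoway K A).

(* w_i for i in [0; n+1], with w_0 = |- and w_{n+1} = -| ; None outside *)
Definition tw_letter (w : seq A) (i : nat) : option (emark A) :=
  match i with
  | 0 => Some LEnd
  | i'.+1 => match onth w i' with
             | Some a => Some (Letter a)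
             | None => if i' == size w then Some REnd else None
             end
  end.

Definition config := (tw_state M * nat)%type.

Definition tw_step (w : seq A) (c c' : config) : option K :=
  match tw_letter w c.2 with
  | None => None
  | Some a =>
      if c'.2 == c.2.+1 then tw_trans M c.1 a Right c'.1
      else if c'.2.+1 == c.2 then tw_trans M c.1 a Left c'.1
      else None
  end.

Fixpoint tw_run (w : seq A) (c : config) (cs : seq config) : option K :=
  match cs with
  | [::] => if c.2 == (size w).+1 then tw_final M c.1 else None
  | c' :: cs' =>
      match tw_step w c c', tw_run w c' cs' with
      | Some x, Some y => Some (x * y)
      | _, _ => None
      end
  end.

Definition tw_comp_weight (w : seq A) (c0 : config) (cs : seq config) : option K :=
  if c0.2 == 1%N then
    match tw_init M c0.1, tw_run w c0 cs with
    | Some x, Some y => Some (x * y)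
    | _, _ => None
    end
  else None.

(* "the weight of w is x": the computations on w form a finite set
   whose weights sum to x *)
Definition tw_has_weight (w : seq A) (x : K) : Prop :=
  exists s : seq (config * seq config),
    uniq s /\
    (forall r, isSome (tw_comp_weight w r.1 r.2) <-> r \in s) /\
    x = \sum_(r <- s) odflt 0 (tw_comp_weight w r.1 r.2).

Definition deterministic : Prop :=
  [/\ (forall p q : tw_state M, isSome (tw_init M p) -> isSome (tw_init M q) -> p = q),
      (forall (p : tw_state M) (a : emark A) (d1 d2 : dir) (q1 q2 : tw_state M),
          isSome (tw_trans M p a d1 q1) -> isSome (tw_trans M p a d2 q2) ->
          d1 = d2 /\ q1 = q2)
    & (forall p : tw_state M, isSome (tw_final M p) ->
          forall d q, tw_trans M p REnd d q = None)].

End TwoWayDefs.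

(* Main.v *)
Require Import Defs.
From mathcomp Require Import all_boot all_algebra.
From mathcomp Require Import zify.
Set Implicit Arguments. Unset Strict Implicit. Unset Printing Implicit Defensive.
Import GRing.Theory.
Local Open Scope ring_scope.

Section Constr.
Variables (K : pzSemiRingType) (A : finType) (M : oneway K A).
Local Notation P := (ow_state M).
Local Notation G := (ow_trans M).

Definition pre (X : {set P}) (c : A) : {set P} :=
  [set s | [exists s', isSome (G s c s') && (s' \in X)]].
Definition Fset : {set P} := [set s | isSome (ow_final M s)].

Definition st : finType := (unit + unit + {set P} + (P * {set P})
  + (P * A * {set P} * {ffun {set P} -> {set P}})
  + (P * {set P} * {set P} * {set P}))%type.

Definition sInit : st := inl (inl (inl (inl (inl tt)))).
Definition sZero : st := inl (inl (inl (inl (inr tt)))).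
Definition sSweep X : st := inl (inl (inl (inr X))).
Definition sMain q X : st := inl (inl (inr (q, X))).
Definition sExc q a b f : st := inl (inr (q, a, b, f)).
Definition sBack q zs y y' : st := inr (q, zs, y, y').

Definition alive (a : A) (b : {set P}) (f : {ffun {set P} -> {set P}}) : {set {set P}} :=
  [set z | (pre z a == b) && [exists x, f x == z]].

Definition mainstep (q : P) (c : A) (z : {set P}) : option (dir * st * K) :=
  match [pick s | isSome (G q c s) && (s \in z)] with
  | Some s => match G q c s with Some x => Some (Right, sMain s z, x) | None => None end
  | None => None end.

Definition backstart q (f : {ffun {set P} -> {set P}}) (alv : {set {set P}}) zs
  : option (dir * st * K) :=
  match [pick z in alv | z != zs], [pick x | f x == zs] with
  | Some z', Some x =>
      match [pick x' | f x' == z'] with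
      | Some x' => Some (Left, sBack q zs x x', 1)
      | None => None end
  | _, _ => None end.

Definition next (s : st) (e : emark A) : option (dir * st * K) :=
  match s, e with
  | inl (inl (inl (inl (inl _)))), Letter _ => Some (Right, sInit, 1)
  | inl (inl (inl (inl (inl _)))), REnd => Some (Left, sSweep Fset, 1)
  | inl (inl (inl (inl (inr _)))), Letter _ => Some (Right, sZero, 1)
  | inl (inl (inl (inr X))), Letter c => Some (Left, sSweep (pre X c), 1)
  | inl (inl (inl (inr X))), LEnd =>
      match [pick s | isSome (ow_init M s) && (s \in X)] with
      | Some s => Some (Right, sMain s X, odflt 0 (ow_init M s))
      | None => Some (Right, sZero, 0) end
  | inl (inl (inr (q, b))), Letter c =>
      if (2 <= #|[set z | pre z c == b]|)%N then Some (Right, sExc q c b [ffun x => x], 1)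
      else match [pick z in [set z | pre z c == b]] with
           | Some z => mainstep q c z | None => None end
  | inl (inr (q, a, b, f)), Letter c =>
      if (2 <= #|alive a b [ffun x => f (pre x c)]|)%N
      then Some (Right, sExc q a b [ffun x => f (pre x c)], 1)
      else match [pick z in alive a b [ffun x => f (pre x c)]] with
           | Some zs => backstart q f (alive a b f) zs | None => None end
  | inl (inr (q, a, b, f)), REnd => backstart q f (alive a b f) (f Fset)
  | inr (q, zs, y, y'), Letter c =>
      if pre y c == pre y' c then mainstep q c zs
      else Some (Left, sBack q zs (pre y c) (pre y' c), 1)
  | _, _ => None
  end.

Definition deq (d1 d2 : dir) : bool :=
  match d1, d2 with Left, Left | Right, Right => true | _, _ => false end.

Lemma deqP d1 d2 : deq d1 d2 -> d1 = d2.
Proof. by case: d1; case: d2. Qed.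

Definition ttrans (p : st) (e : emark A) (d : dir) (q : st) : option K :=
  match next p e with
  | Some (d', q', x) => if deq d d' && (q == q') then Some x else None
  | None => None end.

Definition tinit (p : st) : option K := if p == sInit then Some 1 else None.
Definition tfinal (p : st) : option K :=
  match p with
  | inl (inl (inl (inl (inr _)))) => Some 1
  | inl (inl (inr (q, _))) => ow_final M q
  | _ => None end.

Lemma next_LEnd p d q x : next p LEnd = Some (d, q, x) -> d = Right.
Proof.
rewrite /next.
case: p => [[[[[[]|[]]|X]|[q' b]]|[[[q' a] b] f]]|[[[q' zs] y] y']] //.
by case: pickP => [s _|_] [<- _ _].
Qed.

Lemma next_REnd p d q x : next p REnd = Some (d, q, x) -> d = Left.
Proof.
rewrite /next /backstart.
case: p => [[[[[[]|[]]|X]|[q' b]]|[[[q' a] b] f]]|[[[q' zs] y] y']] //.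
- by case=> <-.
- case: pickP => // z' _; case: pickP => // x' _; case: pickP => // x'' _.
  by case=> <-.
Qed.

Lemma tnoleft p q : ttrans p LEnd Left q = None.
Proof.
rewrite /ttrans; case E: next => [[[d q'] x]|] //.
by rewrite (next_LEnd E).
Qed.

Lemma tnoright p q : ttrans p REnd Right q = None.
Proof.
rewrite /ttrans; case E: next => [[[d q'] x]|] //.
by rewrite (next_REnd E).
Qed.

Definition M' : twoway K A := @TwoWay K A st ttrans tinit tfinal tnoleft tnoright.


Local Notation TW := M'.

Definition nextc (w : seq A) (c : st * nat) : option ((st * nat) * K) :=
  match tw_letter w c.2 with
  | Some e => match next c.1 e with
              | Some (d, p', x) => Some ((p', if d is Right then c.2.+1 else c.2.-1), x)
              | None => None end
  | None => None end.

Lemma nextc_step w c c' x : nextc w c = Some (c', x) -> @tw_step _ _ TW w c c' = Some x.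
Proof.
case: c => p i; case: c' => p' i'; rewrite /nextc /tw_step /=.
case L: tw_letter => [e|] //.
case E: next => [[[d q] y]|] // [E1 E2 E3]; subst p' i' x.
rewrite /ttrans /= E.
case: d E => E /=.
- have := next_LEnd; case: i L E => [|i] L E.
    by move: L => [Le]; subst e => /(_ _ _ _ _ E).
  move=> _ /=; have -> : (i == i.+2) = false by lia.
  by rewrite !eqxx.
- by rewrite !eqxx.
Qed.

Lemma step_nextc w c c' x : @tw_step _ _ TW w c c' = Some x -> nextc w c = Some (c', x).
Proof.
case: c => p i; case: c' => p' i'; rewrite /nextc /tw_step /=.
case L: tw_letter => [e|] //.
rewrite /ttrans /=.
case: eqP => [->|_].
  case E: next => [[[d q] y]|] //.
  by case: d E => E //=; case: eqP => // -> [<-].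
case: eqP => [<-|_] //.
case E: next => [[[d q] y]|] //.
by case: d E => E //=; case: eqP => // -> [<-].
Qed.

Lemma nextc_fun w c c1 c2 x y : nextc w c = Some (c1, x) -> nextc w c = Some (c2, y) -> c1 = c2.
Proof. by move=> -> [->]. Qed.

Lemma final_REnd p : isSome (tfinal p) -> next p REnd = None.
Proof.
by case: p => [[[[[[]|[]]|X]|[q' b]]|[[[q' a] b] f]]|[[[q' zs] y] y']].
Qed.

Lemma letter_end (w : seq A) : tw_letter w (size w).+1 = Some REnd.
Proof. by rewrite /= onth_default // eqxx. Qed.

Lemma run_unique w c cs cs' : isSome (@tw_run _ _ TW w c cs) -> isSome (@tw_run _ _ TW w c cs') -> cs = cs'.
Proof.
elim: cs c cs' => [|c1 cs IH] c [|c2 cs'] //=.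
- case: ifP => // /eqP E F.
  case S: (@tw_step _ _ TW _ _ _) => [x|] //= _.
  move/step_nextc: S; rewrite /nextc E letter_end /= final_REnd //.
- case S: (@tw_step _ _ TW _ _ _) => [x|] //=; case: (@tw_run _ _ TW _ _ _) => [r|] //= _.
  case: ifP => // /eqP E F.
  move/step_nextc: S; rewrite /nextc E letter_end /= final_REnd //.
- case S1: (@tw_step _ _ TW _ _ _) => [x|] //=; case R1: (@tw_run _ _ TW _ _ _) => [r1|] //= _.
  case S2: (@tw_step _ _ TW _ _ _) => [y|] //=; case R2: (@tw_run _ _ TW _ _ _) => [r2|] //= _.
  have E := nextc_fun (step_nextc S1) (step_nextc S2); subst c2.
  by rewrite (IH c1 cs') ?R1 ?R2.
Qed.

Fixpoint pw (w : seq A) (c : st * nat) (cs : seq (st * nat)) : option K :=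
  match cs with
  | [::] => Some 1
  | c' :: cs' => match @tw_step _ _ TW w c c', pw w c' cs' with
                 | Some x, Some y => Some (x * y) | _, _ => None end
  end.

Lemma run_cat w c cs cs' x y : pw w c cs = Some x -> @tw_run _ _ TW w (last c cs) cs' = Some y ->
  @tw_run _ _ TW w c (cs ++ cs') = Some (x * y).
Proof.
elim: cs c x => [|c1 cs IH] c x /=.
  by case=> <- ->; rewrite mul1r.
case S: (@tw_step _ _ TW _ _ _) => [u|] //; case Pw: pw => [v|] //= [<-] R.
by rewrite (IH _ _ Pw R) mulrA.
Qed.

Lemma pw_cat w c cs cs' x y : pw w c cs = Some x -> pw w (last c cs) cs' = Some y ->
  pw w c (cs ++ cs') = Some (x * y).
Proof.
elim: cs c x => [|c1 cs IH] c x /=.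
  by case=> <- ->; rewrite mul1r.
case S: (@tw_step _ _ TW _ _ _) => [u|] //; case Pw: pw => [v|] //= [<-] R.
by rewrite (IH _ _ Pw R) mulrA.
Qed.

Definition reach w c c' x := exists cs, pw w c cs = Some x /\ last c cs = c'.

Lemma reach_refl w c : reach w c c 1.
Proof. by exists [::]. Qed.

Lemma reach_trans w c1 c2 c3 x y : reach w c1 c2 x -> reach w c2 c3 y -> reach w c1 c3 (x * y).
Proof.
move=> [cs [P1 L1]] [cs' [P2 L2]]; exists (cs ++ cs'); split.
  by apply: pw_cat P1 _; rewrite L1.
by rewrite last_cat L1.
Qed.

Lemma reach_step w c1 c2 c3 x y : nextc w c1 = Some (c2, x) -> reach w c2 c3 y -> reach w c1 c3 (x * y).
Proof.
move=> N [cs [P1 L1]]; exists (c2 :: cs); split => //=.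
by rewrite (nextc_step N) P1.
Qed.

Lemma reach_step1 w c1 c2 c3 y : nextc w c1 = Some (c2, 1) -> reach w c2 c3 y -> reach w c1 c3 y.
Proof. by move=> N R; rewrite -[y]mul1r; apply: reach_step N R. Qed.

Definition cf (u : seq A) : {set P} := foldr (fun c X => pre X c) Fset u.
Definition bb (w : seq A) (k : nat) : {set P} := cf (drop k w).

Lemma drop_onth (w : seq A) j c : onth w j = Some c -> drop j w = c :: drop j.+1 w.
Proof.
elim: w j => [|a w IH] [|j] //=; first by case=> ->; rewrite drop0.
exact: IH.
Qed.

Lemma onth_lt (w : seq A) j : (j < size w)%N -> exists c, onth w j = Some c.
Proof. by rewrite -onthTE; case: onth => [c|] // _; exists c. Qed.

Lemma bb_step (w : seq A) k c : onth w k = Some c -> bb w k = pre (bb w k.+1) c.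
Proof. by move=> H; rewrite /bb (drop_onth H). Qed.

Lemma bb_end (w : seq A) : bb w (size w) = Fset.
Proof. by rewrite /bb drop_size. Qed.

Lemma coacc_of_run s u rs : isSome (@ow_run _ _ M s u rs) -> s \in cf u.
Proof.
elim: u s rs => [|c u IH] s [|r rs] //=.
  by rewrite /cf /= inE.
case E: G => [x|] //; case R: ow_run => [y|] // _.
rewrite inE; apply/existsP; exists r; rewrite E /=.
by apply: (IH r rs); rewrite R.
Qed.

Lemma run_of_coacc s u : s \in cf u -> exists rs, isSome (@ow_run _ _ M s u rs).
Proof.
elim: u s => [|c u IH] s /=.
  by rewrite inE => H; exists [::].
rewrite inE => /existsP [r /andP [Hg Hr]].
have [rs Hrs] := IH r Hr; exists (r :: rs) => /=.
by case: (G s c r) Hg => // x _; case: ow_run Hrs.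
Qed.

Lemma run_size s u rs : isSome (@ow_run _ _ M s u rs) -> size rs = size u.
Proof.
elim: u s rs => [|c u IH] s [|r rs] //=.
case: G => [x|] //; case R: ow_run => [y|] // _.
by rewrite (IH r rs) // R.
Qed.

Lemma run_sub q u rs : isSome (@ow_run _ _ M q u rs) -> forall k, (k <= size u)%N ->
  isSome (@ow_run _ _ M (nth q (q :: rs) k) (drop k u) (drop k rs)).
Proof.
elim: u q rs => [|c u IH] q [|r rs] //=.
  by move=> H [|k].
move=> H [|k] Hk; first by rewrite !drop0.
have Hr : isSome (@ow_run _ _ M r u rs) by move: H; case: G => [x|] //; case: ow_run.
have Hs := run_size Hr.
rewrite /= (set_nth_default r q) /=; last by rewrite Hs.
exact: IH.
Qed.

Lemma run_splice q u v ps1 ps2 ps3 : size ps1 = size u ->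
  isSome (@ow_run _ _ M q (u ++ v) (ps1 ++ ps2)) ->
  isSome (@ow_run _ _ M (last q ps1) v ps3) ->
  isSome (@ow_run _ _ M q (u ++ v) (ps1 ++ ps3)).
Proof.
elim: u q ps1 => [|c u IH] q [|p ps1] //= [Hs].
case: G => [x|] //; case R: ow_run => [y|] // _ H3.
have := IH p ps1 Hs; rewrite R => /(_ isT H3).
by case: ow_run.
Qed.

Lemma compw w q r : isSome (@ow_comp_weight _ _ M w q r) =
  isSome (ow_init M q) && isSome (@ow_run _ _ M q w r).
Proof. by rewrite /ow_comp_weight; case: ow_init => //; case: ow_run. Qed.

Lemma last_take (q : P) qs k : (k <= size qs)%N -> last q (take k qs) = nth q (q :: qs) k.
Proof.
move=> Hk; rewrite (last_nth q) size_takel //.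
case: k Hk => [|k] Hk //=.
by rewrite nth_take.
Qed.

Section Path.
Variables (Hun : unambiguous M) (w : seq A) (q0 : P) (qs : seq P).
Hypothesis Hc : isSome (@ow_comp_weight _ _ M w q0 qs).
Local Notation n := (size w).

Definition ps k := nth q0 (q0 :: qs) k.

Lemma Hrun : isSome (@ow_run _ _ M q0 w qs).
Proof. by move: Hc; rewrite compw => /andP []. Qed.

Lemma size_qs : size qs = n.
Proof. exact: run_size Hrun. Qed.

Lemma ps_run k : (k <= n)%N -> isSome (@ow_run _ _ M (ps k) (drop k w) (drop k qs)).
Proof. by move=> Hk; apply: (run_sub Hrun). Qed.

Lemma ps_in k : (k <= n)%N -> ps k \in bb w k.
Proof. by move/ps_run/coacc_of_run. Qed.

Lemma drop_qs k : (k < n)%N -> drop k qs = ps k.+1 :: drop k.+1 qs.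
Proof. by move=> Hk; rewrite (drop_nth q0) ?size_qs. Qed.

Lemma ps_G k c : (k < n)%N -> onth w k = Some c -> isSome (G (ps k) c (ps k.+1)).
Proof.
move=> Hk Hw; have := ps_run (ltnW Hk).
by rewrite (drop_onth Hw) drop_qs //=; case: G => //.
Qed.

Lemma ps_uniq k c s : (k < n)%N -> onth w k = Some c -> isSome (G (ps k) c s) ->
  s \in bb w k.+1 -> s = ps k.+1.
Proof.
move=> Hk Hw Hg /run_of_coacc [rs Hrs].
have Hs : size (take k qs) = size (take k w) by rewrite !size_takel ?size_qs // ltnW.
have H1 : isSome (@ow_run _ _ M q0 (take k w ++ drop k w) (take k qs ++ drop k qs))
  by rewrite !cat_take_drop Hrun.
have H3 : isSome (@ow_run _ _ M (last q0 (take k qs)) (drop k w) (s :: rs)).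
  rewrite last_take ?size_qs 1?ltnW // (drop_onth Hw) /=.
  by case: G Hg => // x _; case: ow_run Hrs.
have := run_splice Hs H1 H3; rewrite cat_take_drop => H.
have Hc2 : isSome (@ow_comp_weight _ _ M w q0 (take k qs ++ s :: rs)).
  rewrite compw H andbT; by move: Hc; rewrite compw => /andP [].
have [_ E] := Hun Hc Hc2.
have Hk2 : size (take k qs) = k by rewrite size_takel // size_qs ltnW.
by rewrite /ps /= E nth_cat Hk2 ltnn subnn.
Qed.

Lemma q0_uniq s : isSome (ow_init M s) -> s \in bb w 0 -> s = q0.
Proof.
move=> Hi; rewrite /bb drop0 => /run_of_coacc [rs Hrs].
have Hc2 : isSome (@ow_comp_weight _ _ M w s rs) by rewrite compw Hi.
by have [E _] := Hun Hc2 Hc.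
Qed.

End Path.

Lemma pick_card1 (T : finType) (S : {set T}) z : z \in S -> (#|S| < 2)%N -> [pick x in S] = Some z.
Proof.
move=> Hz Hc; have /card_le1P H : (#|S| <= 1)%N by [].
case: pickP => [x Hx|H0]; last by have := H0 z; rewrite Hz.
by have := H _ Hz x; rewrite Hx inE => /esym /eqP ->.
Qed.

Lemma two_elems (T : finType) (S : {set T}) z : (2 <= #|S|)%N -> exists2 y, y \in S & y != z.
Proof.
case: (pickP [pred y in S | y != z]) => [y /andP [H1 H2]|H] Hc; first by exists y.
have : (#|S| <= #|[set z]|)%N.
  apply: subset_leq_card; apply/subsetP => y Hy; rewrite inE.
  by have := H y; rewrite /= Hy /= => /negbFE.
by rewrite cards1 => H1; move: (leq_trans Hc H1).
Qed.

Definition preo (X : {set P}) (o : option A) := if o is Some c then pre X c else X.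

Fixpoint TrD (w : seq A) (i d : nat) (X : {set P}) : {set P} :=
  match d with 0 => X | d'.+1 => TrD w i d' (preo X (onth w (i + d')%N)) end.

Lemma TrD_S (w : seq A) i d X : TrD w i d.+1 X = TrD w i d (preo X (onth w (i + d)%N)).
Proof. by []. Qed.

Lemma TrD_b (w : seq A) i d : (i + d <= size w)%N -> TrD w i d (bb w (i + d)%N) = bb w i.
Proof.
elim: d => [|d IH] H; first by rewrite addn0.
have Hlt : (i + d < size w)%N by rewrite addnS in H.
have [c Hc] := onth_lt Hlt.
by rewrite /= Hc /= addnS -(bb_step Hc) IH // ltnW.
Qed.

Lemma letter_mid (w : seq A) j c : onth w j = Some c -> tw_letter w j.+1 = Some (Letter c).
Proof. by move=> /= ->. Qed.

Lemma nextcE (w : seq A) s p e d s' x : tw_letter w p = Some e -> next s e = Some (d, s', x) ->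
  nextc w (s, p) = Some ((s', if d is Right then p.+1 else p.-1), x).
Proof. by rewrite /nextc /= => -> ->. Qed.

Lemma nextcR (w : seq A) s p e s' x : tw_letter w p = Some e -> next s e = Some (Right, s', x) ->
  nextc w (s, p) = Some ((s', p.+1), x).
Proof. exact: nextcE. Qed.

Lemma nextcL (w : seq A) s p e s' x : tw_letter w p = Some e -> next s e = Some (Left, s', x) ->
  nextc w (s, p) = Some ((s', p.-1), x).
Proof. exact: nextcE. Qed.

Lemma inalive a b f z : (z \in alive a b f) = (pre z a == b) && [exists x, f x == z].
Proof. by rewrite inE. Qed.

Lemma backstart_ok q (f : {ffun {set P} -> {set P}}) (alv : {set {set P}}) zs :
  (exists x, f x = zs) -> (exists2 z', z' \in alv & z' != zs) ->
  (forall z', z' \in alv -> exists x, f x = z') ->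
  exists y y' z', [/\ backstart q f alv zs = Some (Left, sBack q zs y y', 1),
     f y = zs, f y' = z', z' \in alv & z' != zs].
Proof.
move=> [x Hx] [z0 Hz0 Hn0] Hall; rewrite /backstart.
case: pickP => [z' /andP [Hz' Hn']|H]; last by have := H z0; rewrite Hz0 Hn0.
case: pickP => [y /eqP Hy|H]; last by have := H x; rewrite Hx eqxx.
case: pickP => [y' /eqP Hy'|H]; last by have [x' Hx'] := Hall z' Hz'; have := H x'; rewrite Hx' eqxx.
by exists y, y', z'.
Qed.

Lemma reach_init (w : seq A) j p : (p + j)%N = size w ->
  reach w (sInit, p.+1) (sInit, (size w).+1) 1.
Proof.
elim: j p => [|j IH] p Hp; first by move: Hp; rewrite addn0 => ->; apply: reach_refl.
have Hlt : (p < size w)%N by rewrite -Hp; lia.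
have [c Hc] := onth_lt Hlt.
apply: reach_step1 (nextcR (letter_mid Hc) (_ : next sInit (Letter c) = _)) _ => //.
by apply: IH; rewrite -Hp; lia.
Qed.

Lemma reach_zero (w : seq A) j p : (p + j)%N = size w ->
  reach w (sZero, p.+1) (sZero, (size w).+1) 1.
Proof.
elim: j p => [|j IH] p Hp; first by move: Hp; rewrite addn0 => ->; apply: reach_refl.
have Hlt : (p < size w)%N by rewrite -Hp; lia.
have [c Hc] := onth_lt Hlt.
apply: reach_step1 (nextcR (letter_mid Hc) (_ : next sZero (Letter c) = _)) _ => //.
by apply: IH; rewrite -Hp; lia.
Qed.

Lemma reach_sweep (w : seq A) l : (l <= size w)%N ->
  reach w (sSweep (bb w l), l) (sSweep (bb w 0), 0) 1.
Proof.
elim: l => [|l IH] Hl; first by apply: reach_refl.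
have [c Hc] := onth_lt Hl.
apply: reach_step1 (nextcL (letter_mid Hc) (_ : next (sSweep (bb w l.+1)) (Letter c) = _)) _ => //.
by rewrite /= -(bb_step Hc); apply: IH; apply: ltnW.
Qed.

Section Path2.
Variables (Hun : unambiguous M) (w : seq A) (q0 : P) (qs : seq P).
Hypothesis Hc : isSome (@ow_comp_weight _ _ M w q0 qs).
Local Notation n := (size w).
Local Notation ps := (ps q0 qs).

Lemma mainstep_ok k c : (k < n)%N -> onth w k = Some c -> exists g,
  G (ps k) c (ps k.+1) = Some g /\
  mainstep (ps k) c (bb w k.+1) = Some (Right, sMain (ps k.+1) (bb w k.+1), g).
Proof.
move=> Hk Hw.
case Eg: (G (ps k) c (ps k.+1)) (ps_G Hc Hk Hw) => [g|] // _.
exists g; split => //; rewrite /mainstep.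
case: pickP => [s /andP [Hg Hs]|H].
  by rewrite (ps_uniq Hun Hc Hk Hw Hg Hs) Eg.
by have := H (ps k.+1); rewrite Eg (ps_in Hc Hk).
Qed.

Variables (k : nat) (a : A).
Hypotheses (Hk : (k < n)%N) (Ha : onth w k = Some a).

Lemma back_ok g : G (ps k) a (ps k.+1) = Some g ->
  forall d y y' z', (k.+1 + d <= n)%N -> TrD w k.+1 d y = bb w k.+1 ->
  TrD w k.+1 d y' = z' -> z' != bb w k.+1 -> pre z' a = bb w k ->
  reach w (sBack (ps k) (bb w k.+1) y y', (k.+1 + d)%N) (sMain (ps k.+1) (bb w k.+1), k.+2) g.
Proof.
move=> Hg; elim=> [|d IH] y y' z' Hd Hy Hy' Hz' Hpz.
  move: Hy Hy' => /= Hy Hy'; subst y y'.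
  have [g' [Eg' Em]] := mainstep_ok Hk Ha.
  move: Eg'; rewrite Hg => -[Eq]; subst g'.
  rewrite addn0 -[g]mulr1; apply: reach_step (reach_refl _ _).
  apply: (nextcR (letter_mid Ha)) => /=.
  by rewrite Hpz -(bb_step Ha) eqxx.
have Hlt : (k.+1 + d < n)%N by rewrite addnS in Hd.
have [c Hc'] := onth_lt Hlt.
move: Hy Hy'; rewrite !TrD_S Hc' /= => Hy Hy'.
rewrite addnS; apply: reach_step1 (IH _ _ z' _ Hy Hy' Hz' Hpz); last by apply: ltnW; rewrite -addnS.
apply: (nextcL (letter_mid Hc')) => /=.
case: eqP => // E; move: Hz'; by rewrite -Hy' -Hy E eqxx.
Qed.

Lemma exc_ok : forall e d (f : {ffun {set P} -> {set P}}), (k.+1 + d + e)%N = n ->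
  (forall x, f x = TrD w k.+1 d x) -> (2 <= #|alive a (bb w k) f|)%N ->
  exists y y' z' d', [/\ reach w (sExc (ps k) a (bb w k) f, (k.+1 + d)%N.+1)
                          (sBack (ps k) (bb w k.+1) y y', (k.+1 + d')%N) 1,
    (k.+1 + d' <= n)%N, TrD w k.+1 d' y = bb w k.+1, TrD w k.+1 d' y' = z'
    & z' != bb w k.+1 /\ pre z' a = bb w k].
Proof.
elim=> [|e IH] d f He Hf H2.
  rewrite addn0 in He.
  have Hfs : f Fset = bb w k.+1 by rewrite Hf -(bb_end w) -He TrD_b // He.
  have [|||y [y' [z' [Eb Hy Hy' Hz' Hn']]]] := @backstart_ok (ps k) f (alive a (bb w k) f) (f Fset).
  - by exists Fset.
  - exact: two_elems.
  - by move=> z'; rewrite inalive => /andP [_ /existsP [x /eqP <-]]; exists x.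
  exists y, y', z', d; split.
  - rewrite -[1]mulr1; apply: reach_step (reach_refl _ _).
    by rewrite He; apply: (nextcL (letter_end w)); rewrite /= Eb Hfs.
  - by rewrite He.
  - by rewrite -Hf Hy.
  - by rewrite -Hf Hy'.
  - by move: Hz' Hn'; rewrite inalive Hfs => /andP [/eqP Hp _] Hn; split.
have Hlt : (k.+1 + d < n)%N by rewrite -He; lia.
have [c Hc'] := onth_lt Hlt.
set f' := [ffun x => f (pre x c)].
have Hf' : forall x, f' x = TrD w k.+1 d.+1 x by move=> x; rewrite ffunE TrD_S Hc' Hf.
case: (leqP 2 #|alive a (bb w k) f'|) => H2'.
  have He' : (k.+1 + d.+1 + e)%N = n by rewrite -He; lia.
  have [y [y' [z' [d' [R Hd Hy Hy' Hz]]]]] := IH d.+1 f' He' Hf' H2'.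
  exists y, y', z', d'; split => //.
  apply: reach_step1 _ R; have -> : (k.+1 + d.+1).+1 = (k.+1 + d).+2 by lia.
  by apply: (nextcR (letter_mid Hc')); rewrite /= -/f' H2'.
have Hin : bb w k.+1 \in alive a (bb w k) f'.
  rewrite inalive -(bb_step Ha) eqxx /=; apply/existsP; exists (bb w (k.+1 + d.+1)%N).
  by rewrite Hf' TrD_b // -He; lia.
have Hpk := pick_card1 Hin H2'.
have [|||y [y' [z' [Eb Hy Hy' Hz' Hn']]]] := @backstart_ok (ps k) f (alive a (bb w k) f) (bb w k.+1).
- exists (pre (bb w (k.+1 + d.+1)%N) c); have := Hf' (bb w (k.+1 + d.+1)%N).
  by rewrite ffunE TrD_b ?addnS // -He; lia.
- exact: two_elems.
- by move=> z'; rewrite inalive => /andP [_ /existsP [x /eqP <-]]; exists x.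
exists y, y', z', d; split.
- rewrite -[1]mulr1; apply: reach_step (reach_refl _ _).
  apply: (nextcL (letter_mid Hc')).
  by rewrite /= -/f' leqNgt H2' /= Hpk Eb.
- by rewrite -He; lia.
- by rewrite -Hf Hy.
- by rewrite -Hf Hy'.
- by move: Hz'; rewrite inalive Hn' => /andP [/eqP]; split.
Qed.

Lemma step_ok : exists g, G (ps k) a (ps k.+1) = Some g /\
  reach w (sMain (ps k) (bb w k), k.+1) (sMain (ps k.+1) (bb w k.+1), k.+2) g.
Proof.
have [g [Eg Em]] := mainstep_ok Hk Ha.
exists g; split => //.
have HZ : bb w k.+1 \in [set z | pre z a == bb w k] by rewrite inE -(bb_step Ha).
case: (leqP 2 #|[set z | pre z a == bb w k]|) => H2.
  have Hal : alive a (bb w k) [ffun x => x] = [set z | pre z a == bb w k].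
    apply/setP => z; rewrite inalive inE; case: eqP => //= _.
    by apply/existsP; exists z; rewrite ffunE.
  have [|||y [y' [z' [d' [R Hd Hy Hy' [Hz Hpz]]]]]] := @exc_ok (n - k.+1) 0 [ffun x => x].
  - by rewrite addn0; lia.
  - by move=> x; rewrite ffunE.
  - by rewrite Hal.
  rewrite -[g]mul1r; apply: reach_step (nextcR (letter_mid Ha) _) _.
    by rewrite /= H2.
  rewrite -[g]mul1r; apply: reach_trans (_ : reach _ _ _ 1) _.
    by rewrite -(addn0 k.+1); apply: R.
  exact: back_ok Eg d' y y' z' Hd Hy Hy' Hz Hpz.
rewrite -[g]mulr1; apply: reach_step (reach_refl _ _).
apply: (nextcR (letter_mid Ha)).
by rewrite /= leqNgt H2 /= (pick_card1 HZ H2).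
Qed.

End Path2.

Section Path3.
Variables (Hun : unambiguous M) (w : seq A) (q0 : P) (qs : seq P).
Hypothesis Hc : isSome (@ow_comp_weight _ _ M w q0 qs).
Local Notation n := (size w).
Local Notation ps := (ps q0 qs).

Lemma main_run j k : (k + j)%N = n -> exists cs,
  @tw_run _ _ TW w (sMain (ps k) (bb w k), k.+1) cs = @ow_run _ _ M (ps k) (drop k w) (drop k qs).
Proof.
elim: j k => [|j IH] k Hj.
  rewrite addn0 in Hj; subst k; exists [::].
  by rewrite /= eqxx drop_size drop_oversize ?(size_qs Hc).
have Hk : (k < n)%N by lia.
have [a Ha] := onth_lt Hk.
have [g [Eg [cs1 [P1 L1]]]] := step_ok Hun Hc Hk Ha.
have Hj' : (k.+1 + j)%N = n by lia.
have [cs2 E2] := IH k.+1 Hj'.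
have Hk1 : (k.+1 <= n)%N by [].
have := ps_run Hc Hk1; rewrite -E2.
case R: (@tw_run _ _ TW _ _ _) => [y|] // _.
exists (cs1 ++ cs2).
rewrite (run_cat P1 (_ : _ = Some y)); last by rewrite L1.
by rewrite (drop_onth Ha) (drop_qs Hc Hk) /= Eg -E2 R.
Qed.

End Path3.

Lemma reach_eq w c c' x y : reach w c c' x -> x = y -> reach w c c' y.
Proof. by move=> H <-. Qed.

Lemma sweep_all (w : seq A) : reach w (sInit, 1) (sSweep (bb w 0), 0) 1.
Proof.
apply: reach_eq (_ : reach _ _ _ (1 * 1)) (mulr1 _).
apply: reach_trans (reach_init (j := size w) (p := 0) _) _; first by rewrite add0n.
apply: reach_step1 (nextcL (letter_end w) (_ : next sInit REnd = _)) _ => //=.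
by rewrite -(bb_end w); apply: reach_sweep.
Qed.

Lemma weight_exists (Hun : unambiguous M) (w : seq A) : exists cs W,
  @tw_run _ _ TW w (sInit, 1) cs = Some W /\ ow_weight M w = W.
Proof.
case: (pickP (fun qt : P * (size w).-tuple P => isSome (@ow_comp_weight _ _ M w qt.1 qt.2))).
- move=> [q0 t] /= Hc.
  have Hi : isSome (ow_init M q0) by move: Hc; rewrite compw => /andP [].
  case Ei: (ow_init M q0) Hi => [i0|] // _.
  have Hrun := Hrun Hc.
  case Er: (@ow_run _ _ M q0 w t) Hrun => [y|] // _.
  have Hn : (0 + size w)%N = size w by [].
  have [cs2 E2] := main_run Hun Hc Hn.
  have R1 : reach w (sInit, 1) (sMain q0 (bb w 0), 1) i0.
    apply: reach_eq (_ : reach _ _ _ (1 * (i0 * 1))) _; last by rewrite mul1r mulr1.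
    apply: reach_trans (sweep_all w) _.
    apply: reach_step (reach_refl _ _).
    apply: (nextcR (_ : tw_letter w 0 = Some LEnd)) => //=.
    case: pickP => [s /andP [Hs1 Hs2]|H].
      by rewrite (q0_uniq Hun Hc Hs1 Hs2) Ei.
    have := H q0; rewrite Ei /=.
    by have := ps_in Hc (k := 0) (leq0n _); rewrite /ps /= => ->.
  have [cs1 [P1 L1]] := R1.
  exists (cs1 ++ cs2), (i0 * y); split.
    apply: run_cat P1 _; rewrite L1.
    by move: E2; rewrite /ps /= !drop0 Er.
  rewrite /ow_weight (bigD1 q0) //= (bigD1 t) //=.
  rewrite [X in _ + X + _]big1; last first.
    move=> t' Ht'; case E: (@ow_comp_weight _ _ M w q0 t') => [x|] //=.
    have Hc2 : isSome (@ow_comp_weight _ _ M w q0 t') by rewrite E.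
    have [_ Et] := Hun _ _ _ _ _ Hc Hc2.
    have Ett : t' = t by apply: val_inj.
    by move: Ht'; rewrite Ett eqxx.
  rewrite [X in _ + X]big1; last first.
    move=> q Hq; apply: big1 => t' _.
    case E: (@ow_comp_weight _ _ M w q t') => [x|] //=.
    have Hc2 : isSome (@ow_comp_weight _ _ M w q t') by rewrite E.
    have [Eq _] := Hun _ _ _ _ _ Hc Hc2.
    by move: Hq; rewrite Eq eqxx.
  by rewrite !addr0 /ow_comp_weight Ei Er.
- move=> H.
  have R1 : reach w (sInit, 1) (sZero, (size w).+1) 0.
    apply: reach_eq (_ : reach _ _ _ (1 * (0 * 1))) _; last by rewrite mul1r mul0r.
    apply: reach_trans (sweep_all w) _.
    apply: reach_step (reach_zero (j := size w) (p := 0) _); last by rewrite add0n.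
    apply: (nextcR (_ : tw_letter w 0 = Some LEnd)) => //=.
    case: pickP => [s /andP [Hs1 Hs2]|//].
    exfalso; move: Hs2; rewrite /bb drop0 => /run_of_coacc [rs Hrs].
    have Hsz : size rs == size w by rewrite (run_size Hrs).
    have := H (s, Tuple Hsz); rewrite /= compw Hs1 /=.
    by move: Hrs; case: ow_run.
  have [cs1 [P1 L1]] := R1.
  exists cs1, (0 * 1); split.
    by rewrite -[cs1]cats0; apply: run_cat P1 _; rewrite L1 /= eqxx.
  rewrite mulr1 /ow_weight big1 // => q _; apply: big1 => t _.
  by have := H (q, t); rewrite /=; case: ow_comp_weight.
Qed.

End Constr.

Theorem mainTheorem5 (K : pzSemiRingType) (A : finType) (M : oneway K A) :
  unambiguous M ->
  exists M' : twoway K A,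
    deterministic M' /\ forall w : seq A, tw_has_weight M' w (ow_weight M w).
Proof.
move=> Hun; exists (M' M); split.
  split.
  - move=> p q /=; rewrite /tinit.
    by case: eqP => // -> _; case: eqP.
  - move=> p a d1 d2 q1 q2 /=; rewrite /ttrans.
    case: next => [[[d q] x]|] //.
    case: ifP => // /andP [/deqP -> /eqP ->] _.
    by case: ifP => // /andP [/deqP -> /eqP ->].
  - by move=> p Hf d q /=; rewrite /ttrans final_REnd.
move=> w.
have [cs [W [Er Ew]]] := weight_exists Hun w.
exists [:: ((sInit M, 1%N), cs)]; split => //; split.
  move=> [[p i] cs'] /=; rewrite inE; split.
    rewrite /tw_comp_weight /=.
    case: eqP => // -> /=; rewrite /tinit.
    case: eqP => // -> /=.
    case E: (@tw_run _ _ (M' M) _ _ _) => [y|] // _.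
    have -> : cs' = cs by apply: (@run_unique _ _ M w (sInit M, 1%N)); rewrite ?E ?Er.
    by [].
  move=> /eqP [-> -> ->].
  by rewrite /tw_comp_weight /= /tinit ?eqxx Er.
by rewrite big_cons big_nil /tw_comp_weight /= /tinit ?eqxx Er /= mul1r addr0.
Qed.
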